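(* Let $g,h\in G(\Gamma)$ and $d=|h^{-1}g|_r$. Then every syllable of (a reduced word for) $h^{-1}g$ is either a syllable from the $d$-tail of $g$, or the inverse of a syllable from the $d$-tail of $h$, or a product $h_i^{-1}g_j$ of a syllable $h_i$ of the $d$-tail of $h$ and a syllable $g_j$ of the $d$-tail of $g$ lying in the same vertex group.
   Context: $G(\Gamma)$ is the graph product of groups $\{G_v\}_{v\in\Gamma}$ over a finite simplicial graph $\Gamma$. Reduced words are words $(g_1,\dots,g_n)$, $g_i\in G_{v_i}$, that cannot be shortened by swapping consecutive syllables from adjacent vertex groups, merging consecutive syllables from the same vertex group, or deleting identity syllables; reduced words for the same element differ by such swaps and have the same multiset of syllables; $|g|_r$ is the length of a reduced word for $g$. The $d$-tail of $g\in G(\Gamma)$ is the set of syllables of $g$ which occur among the last $d$ syllables of some reduced word representing $g$. *)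

(* Defs.v *)
From Stdlib Require Import Relations.
From Stdlib Require List.
From mathcomp Require Import all_boot.
Set Implicit Arguments. Unset Strict Implicit. Unset Printing Implicit Defensive.

Record grp := Grp {
  gcar :> Type;
  gmul : gcar -> gcar -> gcar;
  ginv : gcar -> gcar;
  gone : gcar;
  gmulA : forall x y z, gmul x (gmul y z) = gmul (gmul x y) z;
  gmul1 : forall x, gmul gone x = x;
  gmulV : forall x, gmul (ginv x) x = gone
}.

Section GraphProduct.
(* Finite simplicial graph Gamma: vertex set V (finite), adjacency e
   (symmetry/irreflexivity are hypotheses of the main theorem). *)
Variables (V : finType) (e : rel V) (G : V -> grp).

Definition syll := {v : V & G v}.
Definition word := seq syll.

Definition syll_inv (s : syll) : syll :=
  existT _ (projT1 s) (ginv (projT2 s)).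

Definition word_inv (w : word) : word := rev (map syll_inv w).

Inductive swap_move : word -> word -> Prop :=
| SwapM (u w : word) (v1 v2 : V) (a : G v1) (b : G v2) :
    e v1 v2 ->
    swap_move (u ++ existT _ v1 a :: existT _ v2 b :: w)
              (u ++ existT _ v2 b :: existT _ v1 a :: w).

Inductive merge_move : word -> word -> Prop :=
| MergeM (u w : word) (v : V) (a b : G v) :
    merge_move (u ++ existT _ v a :: existT _ v b :: w)
               (u ++ existT _ v (gmul a b) :: w).

Inductive delete_move : word -> word -> Prop :=
| DeleteM (u w : word) (v : V) :
    delete_move (u ++ existT _ v (gone (G v)) :: w) (u ++ w).

Definition move (w1 w2 : word) : Prop :=
  swap_move w1 w2 \/ merge_move w1 w2 \/ delete_move w1 w2.

(* Two words represent the same element of the graph product G(Gamma)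
   iff they are related by the equivalence closure of the moves
   (this is the standard presentation of G(Gamma) on syllables). *)
Definition wequiv : word -> word -> Prop := clos_refl_sym_trans word move.

Definition reduced (w : word) : Prop :=
  forall w', clos_refl_trans word move w w' -> size w <= size w'.

Definition reduced_for (g r : word) : Prop := reduced r /\ wequiv r g.

Definition tail (d : nat) (g : word) (s : syll) : Prop :=
  exists r, reduced_for g r /\ List.In s (drop (size r - d) r).

End GraphProduct.

(* Main.v *)
Require Import Defs.
From Stdlib Require Import Relations ClassicalEpsilon.
From Stdlib Require List.
From mathcomp Require Import all_boot.
Set Implicit Arguments. Unset Strict Implicit. Unset Printing Implicit Defensive.

Section GrpLemmas.
Variable Gr : grp.
Local Notation "x * y" := (gmul x y).
Local Notation "1" := (gone Gr).
Lemma gmulxV (x : Gr) : x * ginv x = 1.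
Proof.
have -> : x * ginv x = (ginv (ginv x) * ginv x) * (x * ginv x) by rewrite gmulV gmul1.
by rewrite -gmulA (gmulA (ginv x)) gmulV gmul1 gmulV.
Qed.
Lemma gmulx1 (x : Gr) : x * 1 = x.
Proof. by rewrite -(gmulV x) gmulA gmulxV gmul1. Qed.
Lemma ginv_uniq (y z : Gr) : y * z = 1 -> y = ginv z.
Proof. by move=> H; rewrite -(gmulx1 y) -(gmulxV z) gmulA H gmul1. Qed.
Lemma ginvK (x : Gr) : ginv (ginv x) = x.
Proof. by symmetry; apply: ginv_uniq; rewrite gmulxV. Qed.
Lemma ginvM (x y : Gr) : ginv (x * y) = ginv y * ginv x.
Proof. symmetry; apply: ginv_uniq. by rewrite -gmulA (gmulA (ginv x)) gmulV gmul1 gmulV. Qed.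
Lemma ginv1 : ginv 1 = 1 :> Gr.
Proof. by symmetry; apply: ginv_uniq; rewrite gmul1. Qed.
Lemma ginv_eq1 (x : Gr) : ginv x = 1 -> x = 1.
Proof. by move=> H; rewrite -(ginvK x) H ginv1. Qed.
Lemma gmulV_eq1 (a b : Gr) : ginv a * b = 1 -> b = a.
Proof. move=> H; have E := ginv_uniq H; by rewrite -(ginvK b) -E ginvK. Qed.
End GrpLemmas.
Section Main.
Variables (V : finType) (e : rel V) (G : V -> grp).
Hypothesis e_sym : symmetric e.
Hypothesis e_irr : irreflexive e.

Local Notation syl := (syll G).
Local Notation wrd := (word G).

Definition vx (s : syl) : V := projT1 s.
Definition isone (s : syl) : Prop := projT2 s = gone (G (projT1 s)).
Definition isoneb (s : syl) : bool :=
  if excluded_middle_informative (isone s) then true else false.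
Lemma isonebP s : reflect (isone s) (isoneb s).
Proof. rewrite /isoneb; case: excluded_middle_informative => H; by constructor. Qed.

Definition smul (s t : syl) : syl :=
  match s with existT v a =>
   match t with existT u b =>
    match (u =P v) with
    | ReflectT E => existT _ v (gmul a (eq_rect u (fun w => G w) b v E))
    | ReflectF _ => existT _ v a end end end.

Lemma smulE v (a b : G v) : smul (existT _ v a) (existT _ v b) = existT _ v (gmul a b).
Proof.
rewrite /smul; case: eqP => // E.
by rewrite (eq_irrelevance E erefl).
Qed.

Lemma vx_smul s t : vx (smul s t) = vx s.
Proof. case: s => v a; case: t => u b /=; by case: eqP. Qed.

Definition mergeone (s t : syl) : wrd :=
  if isoneb (smul s t) then [::] else [:: smul s t].

Lemma mergeone_cases s t : (mergeone s t = [::]) \/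
  (mergeone s t = [:: smul s t] /\ ~ isone (smul s t)).
Proof. rewrite /mergeone; case: isonebP; auto. Qed.

Fixpoint ins (s : syl) (w : wrd) : option wrd :=
  match w with
  | [::] => None
  | t :: w' => if vx t == vx s then Some (mergeone s t ++ w')
               else if e (vx s) (vx t) then omap (cons t) (ins s w') else None
  end.

Definition act (s : syl) (w : wrd) : wrd :=
  if isoneb s then w else
  match ins s w with Some w' => w' | None => s :: w end.

Definition ev (w : wrd) : wrd := foldr act [::] w.

Definition passes (v : V) (w : wrd) := all (fun t => (vx t != v) && e v (vx t)) w.

Fixpoint CR (w : wrd) : Prop :=
  match w with
  | [::] => True
  | s :: w' => ~ isone s /\ ins s w' = None /\ CR w'
  end.

Lemma passes_ins s a : passes (vx s) a -> ins s a = None \/ False -> True.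
Proof. by []. Qed.

Lemma ins_cat s a b : ins s (a ++ b) =
  match ins s a with
  | Some a' => Some (a' ++ b)
  | None => if passes (vx s) a then omap (cat a) (ins s b) else None
  end.
Proof.
elim: a => [|t a IH] /=; first by case: (ins s b).
case: eqP => Ht /=; first by rewrite catA.
case: (e (vx s) (vx t)) => //=.
rewrite IH; case: (ins s a) => //=.
case: (passes _ _) => //=; by case: (ins s b).
Qed.

Lemma passes_insN s a : passes (vx s) a -> ins s a = None.
Proof.
elim: a => [|t a IH] //= /andP [/andP [H1 H2] H3].
by rewrite (negbTE H1) H2 IH.
Qed.

Lemma ins_Some s w w' : ins s w = Some w' ->
  exists a t b, [/\ w = a ++ t :: b, passes (vx s) a, vx t = vx s &
                  w' = a ++ mergeone s t ++ b].
Proof.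
elim: w w' => [|t w IH] w' //=.
case: eqP => Ht.
  by move=> [<-]; exists [::], t, w.
case He: (e _ _) => //.
case Hi: (ins s w) => [w''|] //= [<-].
have [a [t' [b [-> Hp Ht' ->]]]] := IH _ Hi.
exists (t :: a), t', b; split => //.
rewrite /passes /= -/(passes _ _) He Hp !andbT; by apply/negP=> /eqP.
Qed.

Lemma ins_at s a t b : passes (vx s) a -> vx t = vx s ->
  ins s (a ++ t :: b) = Some (a ++ mergeone s t ++ b).
Proof.
move=> Hp Ht; rewrite ins_cat passes_insN // Hp /= Ht eqxx //.
Qed.

Lemma insN_map s w w' : map vx w = map vx w' -> (ins s w = None <-> ins s w' = None).
Proof.
elim: w w' => [|t w IH] [|t' w'] //= [Ht Hw].
rewrite Ht; case: (_ == _) => //.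
case: (e _ _) => //.
have := IH _ Hw.
case: (ins s w); case: (ins s w') => //= *; firstorder; congruence.
Qed.

Lemma insN_vx s s' w : vx s = vx s' -> (ins s w = None <-> ins s' w = None).
Proof.
move=> E; elim: w => [|t w IH] //=.
rewrite E; case: (_ == _) => //; case: (e _ _) => //.
case: (ins s w) IH; case: (ins s' w) => //= *; firstorder; congruence.
Qed.

Lemma insN_del s a u b : vx u != vx s -> e (vx s) (vx u) ->
  (ins s (a ++ u :: b) = None <-> ins s (a ++ b) = None).
Proof.
move=> H1 H2; rewrite !ins_cat; case: (ins s a) => //; case: (passes _ _) => //=.
rewrite (negbTE H1) H2; by case: (ins s b).
Qed.

Lemma map_vx_mergeone s t : vx t = vx s -> mergeone s t = [::] \/ map vx (mergeone s t) = [:: vx t].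
Proof. move=> E; case: (mergeone_cases s t) => [->|[-> _]]; auto; right; by rewrite /= vx_smul E. Qed.


Definition sw := clos_refl_trans wrd (@swap_move V e G).
Definition mv := clos_refl_trans wrd (@move V e G).

Lemma swap2 (p q : syl) u w : e (vx p) (vx q) -> swap_move e (u ++ p :: q :: w) (u ++ q :: p :: w).
Proof. case: p => v1 a; case: q => v2 b /= H; exact: SwapM. Qed.

Lemma swap_sym (a b : wrd) : swap_move e a b -> swap_move e b a.
Proof. case=> u w v1 v2 x y H; apply: SwapM; by rewrite e_sym. Qed.

Lemma sw_refl a : sw a a.
Proof. exact: rt_refl. Qed.
Lemma sw_trans a b c : sw a b -> sw b c -> sw a c.
Proof. exact: rt_trans. Qed.
Lemma sw_sym a b : sw a b -> sw b a.
Proof.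
elim => [x y H|x|x y z _ H1 _ H2]; first by apply: rt_step; apply: swap_sym.
  exact: rt_refl.
exact: rt_trans H2 H1.
Qed.

Lemma swap_catl (c a b : wrd) : swap_move e a b -> swap_move e (c ++ a) (c ++ b).
Proof. case=> u w v1 v2 x y H; rewrite !catA; exact: SwapM. Qed.
Lemma swap_catr (c a b : wrd) : swap_move e a b -> swap_move e (a ++ c) (b ++ c).
Proof. case=> u w v1 v2 x y H; rewrite -!catA /=; exact: SwapM. Qed.

Lemma sw_catl c a b : sw a b -> sw (c ++ a) (c ++ b).
Proof.
elim => [x y H|x|x y z _ H1 _ H2]; last exact: rt_trans H1 H2.
  by apply: rt_step; apply: swap_catl.
exact: rt_refl.
Qed.
Lemma sw_catr c a b : sw a b -> sw (a ++ c) (b ++ c).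
Proof.
elim => [x y H|x|x y z _ H1 _ H2]; last exact: rt_trans H1 H2.
  by apply: rt_step; apply: swap_catr.
exact: rt_refl.
Qed.
Lemma sw_cons c a b : sw a b -> sw (c :: a) (c :: b).
Proof. exact: (sw_catl [:: c]). Qed.

Lemma sw_size a b : sw a b -> size a = size b.
Proof.
elim => [x y H|x|x y z _ H1 _ H2] //; last by rewrite H1.
by case: H => u w v1 v2 p q _; rewrite !size_cat.
Qed.

Lemma sw_In a b s : sw a b -> List.In s a -> List.In s b.
Proof.
elim => [x y H|x|x y z _ H1 _ H2] //; last by auto.
case: H => u w v1 v2 p q _; rewrite !List.in_app_iff /=; tauto.
Qed.

Lemma sw_pass c a b : passes (vx c) a -> sw (c :: a ++ b) (a ++ c :: b).
Proof.
elim: a => [|t a IH] /=; first by move=> _; exact: rt_refl.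
move=> /andP [/andP [H1 H2] H3].
apply: rt_trans (sw_cons t (IH H3)).
apply: rt_step; clear IH H3; move: H1 H2; case: c => v x; case: t => u y /= H1 H2.
exact: (@SwapM _ _ _ [::]).
Qed.

Lemma sw_mv a b : sw a b -> mv a b.
Proof.
elim => [x y H|x|x y z _ H1 _ H2]; last exact: rt_trans H1 H2.
  by apply: rt_step; left.
exact: rt_refl.
Qed.

Lemma reduced_sw a b : reduced e a -> sw a b -> reduced e b.
Proof.
move=> Ha Hab w' Hw; rewrite -(sw_size Hab); apply: Ha.
exact: rt_trans (sw_mv Hab) Hw.
Qed.

Lemma not_reduced_merge w a s t b : reduced e w -> sw w (a ++ s :: t :: b) ->
  vx s = vx t -> False.
Proof.
move=> Hr Hs; case: s Hs => v x; case: t => u y /= Hs E; subst u.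
have Hr' := reduced_sw Hr Hs.
have := Hr' (a ++ existT _ v (gmul x y) :: b).
have H : mv (a ++ [:: existT (fun v => G v) v x, existT _ v y & b])
            (a ++ existT _ v (gmul x y) :: b) by apply: rt_step; right; left; constructor.
move=> /(_ H); rewrite !size_cat /= !addnS ltnn //.
Qed.

Lemma size_mergeone s t : size (mergeone s t) <= 1.
Proof. by case: (mergeone_cases s t) => [->|[-> _]]. Qed.

Lemma insN_head x m t b : vx m = vx t -> (ins x (m :: b) = None <-> ins x (t :: b) = None).
Proof. by move=> E; apply: insN_map; rewrite /= E. Qed.

Lemma CR_merge s t a b : vx s = vx t -> CR (a ++ t :: b) -> passes (vx t) a ->
  CR (a ++ mergeone s t ++ b).
Proof.
move=> E; elim: a => [|x a IH] /=.
  move=> [Ht [Hi Hb]] _; case: (mergeone_cases s t) => [->|[-> Hn]] //=.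
  split=> //; split=> //; apply/(insN_vx _ (s':=t)) => //; by rewrite vx_smul.
move=> [Hx [Hi Hr]] /andP [/andP [H1 H2] H3].
split=> //; split; last exact: IH.
move: Hi; rewrite !ins_cat; case: (ins x a) => //.
case: (passes _ _) => //.
case: (mergeone_cases s t) => [->|[-> _]] /=.
  rewrite eq_sym (negbTE H1) e_sym H2.
  by case: (ins x b).
have Hm : vx (smul s t) = vx t by rewrite vx_smul.
move=> Hi; rewrite /= Hm eq_sym (negbTE H1) e_sym H2 /= in Hi *; by case: (ins x b) Hi.
Qed.

Lemma act_CR s w : CR w -> CR (act s w).
Proof.
rewrite /act; case: isonebP => // Hs Hw.
case Hi: (ins s w) => [w'|] /=; last by [].
have [a [t [b [Ew Hp Ht ->]]]] := ins_Some Hi.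
subst w; apply: CR_merge => //; by rewrite Ht.
Qed.

Lemma CR_ev w : CR (ev w).
Proof. elim: w => [|s w IH] //=; exact: act_CR. Qed.

Lemma ev_CR w : CR w -> ev w = w.
Proof.
elim: w => [|s w IH] //= [Hs [Hi Hw]].
by rewrite IH // /act Hi; case: isonebP.
Qed.

Lemma size_ins s w w' : ins s w = Some w' -> size w' <= size w.
Proof.
move=> /ins_Some [a [t [b [-> _ _ ->]]]].
rewrite !size_cat /= leq_add2l -add1n leq_add2r; exact: size_mergeone.
Qed.

Lemma size_act s w : size (act s w) <= (size w).+1.
Proof.
rewrite /act; case: isoneb => //; case Hi: (ins s w) => [w'|] //.
by apply: leq_trans (size_ins Hi) _.
Qed.

Lemma size_ev w : size (ev w) <= size w.
Proof. elim: w => [|s w IH] //=; apply: leq_trans (size_act s _) _; by rewrite ltnS. Qed.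

Lemma ins_swap s x y r : e (vx x) (vx y) ->
  match ins s (x :: y :: r), ins s (y :: x :: r) with
  | Some a, Some b => sw a b | None, None => True | _, _ => False end.
Proof.
move=> Hxy /=.
have Nxy : vx x != vx y by apply/negP => /eqP E; move: Hxy; rewrite E e_irr.
case: (eqVneq (vx x) (vx s)) => Hx; case: (eqVneq (vx y) (vx s)) => Hy.
- by move: Nxy; rewrite Hx Hy eqxx.
- rewrite -Hx Hxy /=.
  case: (mergeone_cases s x) => [->|[-> _]] /=; first exact: sw_refl.
  apply: rt_step; apply: (@swap2 _ _ [::]); by rewrite vx_smul -Hx.
- rewrite -Hy e_sym Hxy /=.
  case: (mergeone_cases s y) => [->|[-> _]] /=; first exact: sw_refl.
  apply: rt_step; apply: (@swap2 _ _ [::]); by rewrite vx_smul -Hy.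
- case: (e (vx s) (vx x)); case: (e (vx s) (vx y)) => //=.
  case: (ins s r) => //= r'.
  apply: rt_step; exact: (@swap2 _ _ [::]).
Qed.

Lemma act_swap1 s w w' : swap_move e w w' -> sw (act s w) (act s w').
Proof.
case=> u r v1 v2 x y H; rewrite /act; case: isoneb.
  by apply: rt_step; constructor.
rewrite !ins_cat; case: (ins s u) => [u'|].
  by apply: rt_step; constructor.
have Hs : sw (s :: u ++ [:: existT _ v1 x, existT _ v2 y & r])
             (s :: u ++ [:: existT _ v2 y, existT _ v1 x & r]).
  by apply: rt_step; apply: (@SwapM _ _ _ (s :: u)).
case: (passes _ _) => //.
have := @ins_swap s (existT _ v1 x) (existT _ v2 y) r H.
case: (ins s _) => [a|]; case: (ins s _) => [b|] //= Hab.
exact: sw_catl.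
Qed.

Lemma act_sw s w w' : sw w w' -> sw (act s w) (act s w').
Proof.
elim => [x y H|x|x y z _ H1 _ H2]; last exact: rt_trans H1 H2.
  exact: act_swap1.
exact: rt_refl.
Qed.

Lemma foldr_act_sw u w w' : sw w w' -> sw (foldr act w u) (foldr act w' u).
Proof. move=> H; elim: u => [|s u IH] //=; exact: act_sw. Qed.

Lemma act_one s w : isone s -> act s w = w.
Proof. by rewrite /act; case: isonebP. Qed.
Lemma act_none s w : ~ isone s -> ins s w = None -> act s w = s :: w.
Proof. by rewrite /act => H ->; case: isonebP. Qed.
Lemma act_some s w w' : ~ isone s -> ins s w = Some w' -> act s w = w'.
Proof. by rewrite /act => H ->; case: isonebP. Qed.

Lemma isoneE v (a : G v) : isone (existT _ v a) <-> a = gone (G v).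
Proof. by []. Qed.

Lemma mergeone_one v (a b : G v) : gmul a b = gone _ ->
  mergeone (existT _ v a) (existT _ v b) = [::].
Proof. by rewrite /mergeone smulE; case: isonebP. Qed.
Lemma mergeone_ne v (a b : G v) : gmul a b <> gone _ ->
  mergeone (existT _ v a) (existT _ v b) = [:: existT _ v (gmul a b)].
Proof. by rewrite /mergeone smulE; case: isonebP. Qed.

Lemma CR_catr a b : CR (a ++ b) -> CR b.
Proof. elim: a => [|x a IH] //= [_ [_ H]]; exact: IH. Qed.

Lemma passes_cat v a b : passes v (a ++ b) = passes v a && passes v b.
Proof. exact: all_cat. Qed.

Lemma passes_mergeone v s t : vx s != v -> e v (vx s) -> passes v (mergeone s t).
Proof.
move=> H1 H2; case: (mergeone_cases s t) => [->|[-> _]] //=.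
by rewrite vx_smul H1 H2.
Qed.

Lemma ins_cons_adj s x w : vx x != vx s -> e (vx s) (vx x) ->
  ins s (x :: w) = omap (cons x) (ins s w).
Proof. by move=> H1 H2 /=; rewrite (negbTE H1) H2. Qed.

Lemma act_oneE v (a : G v) w : a = gone _ -> act (existT _ v a) w = w.
Proof. exact: (@act_one (existT _ v a) w). Qed.
Lemma act_noneE v (a : G v) w : a <> gone _ -> ins (existT _ v a) w = None ->
  act (existT _ v a) w = existT _ v a :: w.
Proof. exact: (@act_none (existT _ v a) w). Qed.
Lemma act_someE v (a : G v) w w' : a <> gone _ -> ins (existT _ v a) w = Some w' ->
  act (existT _ v a) w = w'.
Proof. exact: (@act_some (existT _ v a) w w'). Qed.

Lemma ins_atE v (x y : G v) A B : passes v A ->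
  ins (existT _ v x) (A ++ existT _ v y :: B) =
  Some (A ++ mergeone (existT _ v x) (existT _ v y) ++ B).
Proof. move=> Hp; exact: (@ins_at (existT _ v x) A (existT _ v y) B Hp erefl). Qed.
Lemma passes_insNE v (x : G v) A : passes v A -> ins (existT _ v x) A = None.
Proof. exact: (@passes_insN (existT _ v x) A). Qed.

Lemma mergeone_assoc v (a b c : G v) :
  mergeone (existT _ v a) (existT _ v (gmul b c)) = mergeone (existT _ v (gmul a b)) (existT _ v c).
Proof. by rewrite /mergeone !smulE gmulA. Qed.

Lemma act_merge v (a b : G v) W : CR W ->
  sw (act (existT _ v a) (act (existT _ v b) W)) (act (existT _ v (gmul a b)) W).
Proof.
move=> HW.
case: (classic (b = gone _)) => Hb.
  by rewrite (act_oneE _ Hb) Hb gmulx1; exact: sw_refl.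
case Hi: (ins (existT _ v b) W) => [W'|].
  have [A [u [B [EW Hp Hu EW']]]] := ins_Some Hi.
  move: Hu EW EW' Hp; case: u => v' c /= Hu; subst v' => EW EW' Hp.
  rewrite (act_someE Hb Hi) EW'.
  have HCu : CR (existT _ v c :: B) by apply: (@CR_catr A); rewrite -EW.
  case: HCu => [Hc [HiB _]].
  case: (classic (a = gone _)) => Ha.
    by rewrite (act_oneE _ Ha) Ha gmul1 (act_someE Hb Hi) EW'; exact: sw_refl.
  case: (classic (gmul b c = gone _)) => Hbc.
    rewrite (mergeone_one Hbc) /=.
    have Hn : ins (existT _ v a) (A ++ B) = None.
      rewrite ins_cat (passes_insNE _ Hp) Hp.
      by move: HiB => /(insN_vx B (s:=existT _ v c) (s':=existT _ v a) erefl) ->.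
    rewrite (act_noneE Ha Hn).
    have Hac : gmul (gmul a b) c = a by rewrite -gmulA Hbc gmulx1.
    case: (classic (gmul a b = gone _)) => Hab.
      rewrite (act_oneE _ Hab) EW.
      have -> : a = c by rewrite -Hac Hab gmul1.
      exact: sw_pass.
    rewrite EW (act_someE Hab (ins_atE _ _ _ Hp)) (mergeone_ne (b:=c)) Hac //.
    exact: sw_pass.
  rewrite (mergeone_ne Hbc) /=.
  rewrite (act_someE Ha (ins_atE _ _ _ Hp)).
  case: (classic (gmul a b = gone _)) => Hab.
    rewrite (act_oneE _ Hab) EW (mergeone_ne (a:=a) (b:=gmul b c)); last by rewrite gmulA Hab gmul1.
    rewrite gmulA Hab gmul1; exact: sw_refl.
  rewrite EW (act_someE Hab (ins_atE _ _ _ Hp)) mergeone_assoc; exact: sw_refl.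
rewrite (act_noneE Hb Hi).
case: (classic (a = gone _)) => Ha.
  by rewrite (act_oneE _ Ha) Ha gmul1 (act_noneE Hb Hi); exact: sw_refl.
have Hi2 : ins (existT _ v a) (existT _ v b :: W) =
           Some (mergeone (existT _ v a) (existT _ v b) ++ W) by rewrite /= eqxx.
rewrite (act_someE Ha Hi2).
case: (classic (gmul a b = gone _)) => Hab.
  by rewrite (act_oneE _ Hab) (mergeone_one Hab); exact: sw_refl.
rewrite (mergeone_ne Hab) (act_noneE Hab); first exact: sw_refl.
by move: Hi => /(insN_vx W (s:=existT _ v b) (s':=existT _ v (gmul a b)) erefl).
Qed.

Lemma vx_neq_adj s t : e (vx s) (vx t) -> vx t != vx s.
Proof. move=> H; apply/negP => /eqP E; by move: H; rewrite E e_irr. Qed.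

Lemma act_swap_some s t W W1 : e (vx s) (vx t) -> ~ isone s -> ~ isone t ->
  ins t W = Some W1 -> act s W1 = act t (act s W).
Proof.
move=> Hst Hs Ht Hi.
have N1 := vx_neq_adj Hst.
have N2 : vx s != vx t by rewrite eq_sym.
have Hts : e (vx t) (vx s) by rewrite e_sym.
have [A [u [B [EW Hp Hu EW1]]]] := ins_Some Hi.
have Hpm : passes (vx s) (mergeone t u) by apply: passes_mergeone.
have Hnu : vx u != vx s by rewrite Hu.
have Heu : e (vx s) (vx u) by rewrite Hu.
have Hst1 : act t (s :: W) = s :: W1.
  by rewrite (act_some Ht (s:=t) (w' := s :: W1)) // ins_cons_adj // Hi.
subst W W1.
case HA: (ins s A) => [A'|].
  have [A1 [u' [A2 [EA Hp1 Hu' EA']]]] := ins_Some HA.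
  have HsA : ins s (A ++ u :: B) = Some (A' ++ u :: B) by rewrite ins_cat HA.
  rewrite (act_some Hs HsA).
  have HpA' : passes (vx t) A'.
    move: Hp; rewrite EA EA' !passes_cat /= => /and3P [-> _ ->]; rewrite andbT /=.
    apply: passes_mergeone => //.
  rewrite (act_some Ht (ins_at _ HpA' Hu)).
  rewrite (act_some Hs (w' := A' ++ mergeone t u ++ B)) //.
  by rewrite ins_cat HA.
case HpA: (passes (vx s) A); last first.
  have Hn : ins s (A ++ u :: B) = None by rewrite ins_cat HA HpA.
  rewrite (act_none Hs Hn) Hst1 (act_none Hs) //.
  by rewrite ins_cat HA HpA.
case HB: (ins s B) => [B'|].
  have HsW : ins s (A ++ u :: B) = Some (A ++ u :: B').
    by rewrite ins_cat HA HpA ins_cons_adj // HB.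
  rewrite (act_some Hs HsW) (act_some Ht (ins_at _ Hp Hu)).
  apply: act_some => //.
  by rewrite ins_cat HA HpA ins_cat (passes_insN Hpm) Hpm HB.
have Hn : ins s (A ++ u :: B) = None by rewrite ins_cat HA HpA ins_cons_adj // HB.
rewrite (act_none Hs Hn) Hst1 (act_none Hs) //.
by rewrite ins_cat HA HpA ins_cat (passes_insN Hpm) Hpm HB.
Qed.

Lemma act_swap s t W : e (vx s) (vx t) ->
  sw (act s (act t W)) (act t (act s W)).
Proof.
move=> Hst.
case: (classic (isone s)) => Hs.
  rewrite !(act_one _ Hs); exact: sw_refl.
case: (classic (isone t)) => Ht.
  rewrite !(act_one _ Ht); exact: sw_refl.
have Hts : e (vx t) (vx s) by rewrite e_sym.
case Hi: (ins t W) => [W1|].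
  rewrite (act_some Ht Hi) (act_swap_some Hst Hs Ht Hi); exact: sw_refl.
case Hi2: (ins s W) => [W2|].
  rewrite (act_some Hs Hi2) (act_swap_some Hts Ht Hs Hi2); exact: sw_refl.
rewrite (act_none Ht Hi) (act_none Hs Hi2) (act_none Hs) ?(act_none Ht).
- apply: rt_step; exact: (@swap2 _ _ [::]).
- by rewrite ins_cons_adj // ?Hi // vx_neq_adj.
- by rewrite ins_cons_adj // ?Hi2 // vx_neq_adj.
Qed.

Lemma ev_cat a b : ev (a ++ b) = foldr act (ev b) a.
Proof. by rewrite /ev foldr_cat. Qed.

Lemma ev_move w w' : move e w w' -> sw (ev w) (ev w').
Proof.
case=> [[u r v1 v2 x y H]|[[u r v x y]|[u r v]]]; rewrite !ev_cat; apply: foldr_act_sw => /=.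
- exact: act_swap.
- exact: act_merge (CR_ev r).
- rewrite act_oneE //; exact: sw_refl.
Qed.

Lemma ev_mv w w' : mv w w' -> sw (ev w) (ev w').
Proof.
elim => [x y H|x|x y z _ H1 _ H2]; last exact: rt_trans H1 H2.
  exact: ev_move.
exact: rt_refl.
Qed.

Lemma ev_wequiv w w' : wequiv e w w' -> sw (ev w) (ev w').
Proof.
elim => [x y H|x|x y _ H|x y z _ H1 _ H2]; last exact: rt_trans H1 H2.
- exact: ev_move.
- exact: rt_refl.
- exact: sw_sym.
Qed.

Lemma CR_reduced (w : wrd) : CR w -> reduced e w.
Proof.
move=> Hw w' Hm; have := sw_size (ev_mv Hm).
rewrite (ev_CR Hw) => ->; exact: size_ev.
Qed.

Lemma move_catl (c a b : wrd) : move e a b -> move e (c ++ a) (c ++ b).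
Proof.
case=> [[u r v1 v2 x y H]|[[u r v x y]|[u r v]]]; rewrite !catA.
- by left; constructor.
- by right; left; constructor.
- by right; right; constructor.
Qed.
Lemma move_catr (c a b : wrd) : move e a b -> move e (a ++ c) (b ++ c).
Proof.
case=> [[u r v1 v2 x y H]|[[u r v x y]|[u r v]]]; rewrite -!catA /=.
- by left; constructor.
- by right; left; constructor.
- by right; right; constructor.
Qed.
Lemma mv_catl c a b : mv a b -> mv (c ++ a) (c ++ b).
Proof.
elim => [x y H|x|x y z _ H1 _ H2]; last exact: rt_trans H1 H2.
  by apply: rt_step; apply: move_catl.
exact: rt_refl.
Qed.
Lemma mv_catr c a b : mv a b -> mv (a ++ c) (b ++ c).
Proof.
elim => [x y H|x|x y z _ H1 _ H2]; last exact: rt_trans H1 H2.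
  by apply: rt_step; apply: move_catr.
exact: rt_refl.
Qed.

Lemma ins_mv s w w' : ins s w = Some w' -> mv (s :: w) w'.
Proof.
elim: w w' => [|t w IH] w' //=.
case: eqP => Ht.
  move=> [<-]; clear IH; move: Ht; case: s => v a; case: t => u b /= Ht; subst u.
  have M1 : mv [:: existT _ v a, existT _ v b & w] (existT _ v (gmul a b) :: w).
    by apply: rt_step; right; left; exact: (@MergeM _ _ [::]).
  case: (classic (gmul a b = gone _)) => Hab.
    rewrite (mergeone_one Hab); apply: rt_trans M1 _; rewrite Hab.
    by apply: rt_step; right; right; exact: (@DeleteM _ _ [::]).
  by rewrite (mergeone_ne Hab).
case He: (e _ _) => //.
case Hi: (ins s w) => [w''|] //= [<-].
apply: rt_trans (mv_catl [:: t] (IH _ Hi)).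
apply: rt_step; left; apply: (@swap2 _ _ [::]) => //.
Qed.

Lemma act_mv s w : mv (s :: w) (act s w).
Proof.
rewrite /act; case: isonebP => Hs.
  move: Hs; case: s => v a; rewrite /isone /= => ->.
  by apply: rt_step; right; right; exact: (@DeleteM _ _ [::]).
case Hi: (ins s w) => [w'|]; first exact: ins_mv.
exact: rt_refl.
Qed.

Lemma ev_mv_to w : mv w (ev w).
Proof.
elim: w => [|s w IH] /=; first exact: rt_refl.
apply: rt_trans (mv_catl [:: s] IH) _; exact: act_mv.
Qed.

Lemma reduced_cons (s : syl) (w : wrd) : reduced e (s :: w) -> reduced e w.
Proof.
move=> H w' Hm; have := H _ (mv_catl [:: s] Hm); by rewrite /= ltnS.
Qed.

Lemma reduced_CR (w : wrd) : reduced e w -> CR w.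
Proof.
elim: w => [|s w IH] //= Hr.
split; last split; last exact: IH (reduced_cons Hr).
- clear IH => Hs; move: Hr; case: s Hs => v a; rewrite /isone /= => -> Hr.
  have H : mv (existT _ v (gone (G v)) :: w) w.
    by apply: rt_step; right; right; exact: (@DeleteM _ _ [::]).
  by have := Hr w H; rewrite /= ltnn.
- case Hi: (ins s w) => [w'|] //.
  have := Hr _ (ins_mv Hi); have := size_ins Hi; rewrite /=.
  move=> H1 H2; have := leq_trans H2 H1; by rewrite ltnn.
Qed.

Lemma CR_catl a b : CR (a ++ b) -> CR a.
Proof.
move=> /CR_reduced H; apply: reduced_CR => w' Hm.
have := H _ (mv_catr b Hm); by rewrite !size_cat leq_add2r.
Qed.

Lemma CR_sw a b : CR a -> sw a b -> CR b.
Proof. move=> /CR_reduced H Hs; apply: reduced_CR; exact: reduced_sw H Hs. Qed.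

Lemma word_inv_cat (a b : wrd) : word_inv (a ++ b) = word_inv b ++ word_inv a.
Proof. by rewrite /word_inv map_cat rev_cat. Qed.
Lemma word_inv_cons (x : syl) (w : wrd) : word_inv (x :: w) = word_inv w ++ [:: syll_inv x].
Proof. by rewrite /word_inv /= rev_cons cats1. Qed.
Lemma word_inv_nil : word_inv ([::] : wrd) = [::].
Proof. by []. Qed.
Lemma syll_invK (s : syl) : syll_inv (syll_inv s) = s.
Proof. case: s => v a; by rewrite /syll_inv /= ginvK. Qed.
Lemma word_invK (w : wrd) : word_inv (word_inv w) = w.
Proof.
elim: w => [|x w IH] //; rewrite word_inv_cons word_inv_cat IH /=.
by rewrite /word_inv /= syll_invK.
Qed.
Lemma vx_inv (s : syl) : vx (syll_inv s) = vx s.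
Proof. by case: s. Qed.
Lemma passes_inv v (a : wrd) : passes v (word_inv a) = passes v a.
Proof. by rewrite /passes /word_inv all_rev all_map; apply: eq_all => t; case: t. Qed.

Lemma move_inv (a b : wrd) : move e a b -> move e (word_inv a) (word_inv b).
Proof.
case=> [[u r v1 v2 x y H]|[[u r v x y]|[u r v]]]; rewrite !word_inv_cat !word_inv_cons.
- rewrite -!catA /=; left; constructor; by rewrite e_sym.
- rewrite -!catA /= /syll_inv /= ginvM; right; left; constructor.
- rewrite /= /syll_inv /= ginv1 -catA /=; right; right; constructor.
Qed.
Lemma mv_inv a b : mv a b -> mv (word_inv a) (word_inv b).
Proof.
elim => [x y H|x|x y z _ H1 _ H2]; last exact: rt_trans H1 H2.
  by apply: rt_step; apply: move_inv.
exact: rt_refl.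
Qed.

Lemma In_rev (x : syl) (s : wrd) : List.In x (rev s) <-> List.In x s.
Proof.
elim: s => [|y s IH] //=; rewrite rev_cons -cats1 List.in_app_iff /=; tauto.
Qed.
Lemma In_map A B (f : A -> B) x (s : seq A) : List.In x (map f s) -> exists y, List.In y s /\ x = f y.
Proof.
elim: s => [|y s IH] //= [<-|H]; first by exists y; auto.
by have [z [Hz ->]] := IH H; exists z; auto.
Qed.
Lemma In_map2 A B (f : A -> B) y (s : seq A) : List.In y s -> List.In (f y) (map f s).
Proof. elim: s => [|z s IH] //= [E|H]; [by left; rewrite E | by right; auto]. Qed.
Lemma In_inv (x : syl) (z : wrd) : List.In x (word_inv z) -> exists t, List.In t z /\ x = syll_inv t.
Proof. rewrite /word_inv => /In_rev; exact: In_map. Qed.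

Lemma map_eq_cons A B (f : A -> B) (s : seq A) A1 m A2 : map f s = A1 ++ m :: A2 ->
  exists s1 k s2, [/\ s = s1 ++ k :: s2, A1 = map f s1, m = f k & A2 = map f s2].
Proof.
elim: A1 s => [|a A1 IH] [|k s] //= [E1 E2].
  by exists [::], k, s.
have [s1 [k' [s2 [-> -> -> ->]]]] := IH _ E2.
by exists (k :: s1), k', s2; rewrite -E1.
Qed.

Definition psyl := {v : V & (G v * G v)%type}.
Definition Ps (k : psyl) : syl := existT _ (projT1 k) (projT2 k).2.
Definition Qs (k : psyl) : syl := existT _ (projT1 k) (projT2 k).1.
Definition Ms (k : psyl) : syl := existT _ (projT1 k) (gmul (ginv (projT2 k).1) (projT2 k).2).
Definition padj (pq : seq psyl) := pairwise (fun k k' : psyl => e (projT1 k) (projT1 k')) pq.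

Lemma passes_map v (f : psyl -> syl) pq : (forall k, vx (f k) = projT1 k) ->
  passes v (map f pq) = all (fun k => (projT1 k != v) && e v (projT1 k)) pq.
Proof. move=> H; rewrite /passes all_map; apply: eq_all => k /=; by rewrite H. Qed.

Lemma passes_P v pq : passes v (map Ps pq) = passes v (map Ms pq).
Proof. by rewrite !passes_map. Qed.
Lemma passes_Q v pq : passes v (map Qs pq) = passes v (map Ms pq).
Proof. by rewrite !passes_map. Qed.

Lemma isone_inv (s : syl) : ~ isone s -> ~ isone (syll_inv s).
Proof. case: s => v a; rewrite /isone /= => H E; apply: H; exact: ginv_eq1 E. Qed.

Lemma sw_passr c a : passes (vx c) a -> sw (a ++ [:: c]) (c :: a).
Proof. move=> H; apply: sw_sym; have := @sw_pass c a [::] H; by rewrite cats0. Qed.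
Lemma sw_passl c a b : passes (vx c) a -> sw (a ++ c :: b) (c :: a ++ b).
Proof. move=> H; apply: sw_sym; exact: sw_pass. Qed.

Lemma decomp (g0 : wrd) : CR g0 -> forall hp : wrd, CR hp -> exists x pq y z,
  [/\ sw g0 (x ++ map Ps pq ++ y), sw hp (x ++ map Qs pq ++ z),
      sw (foldr act g0 (word_inv hp)) (word_inv z ++ map Ms pq ++ y) & padj pq].
Proof.
move=> Hg; elim/last_ind => [|hp c IH] Hc.
  exists [::], [::], g0, [::]; split => //; exact: sw_refl.
rewrite -cats1 in Hc *.
have [x [pq [y [z [H1 H2 H3 H4]]]]] := IH (CR_catl Hc).
have Hred := CR_reduced Hc.
have Hcn : ~ isone c by case: (CR_catr Hc).
have Hci := isone_inv Hcn.
set ci := syll_inv c in Hci *.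
have Hvc : vx ci = vx c by rewrite /ci vx_inv.
rewrite word_inv_cat /= -/ci.
set L := word_inv z ++ map Ms pq ++ y.
have HW := act_sw ci H3.
have Hh : sw (hp ++ [:: c]) (x ++ map Qs pq ++ z ++ [:: c]).
  by rewrite !catA; apply: sw_catr; rewrite -catA.
suff [x' [pq' [y' [z' [K1 K2 K3 K4]]]]] : exists x' pq' y' z',
    [/\ sw g0 (x' ++ map Ps pq' ++ y'), sw (hp ++ [:: c]) (x' ++ map Qs pq' ++ z'),
        sw (act ci L) (word_inv z' ++ map Ms pq' ++ y') & padj pq'].
  by exists x', pq', y', z'; split => //; exact: sw_trans HW K3.
have prep : ins ci L = None -> exists x' pq' y' z',
    [/\ sw g0 (x' ++ map Ps pq' ++ y'), sw (hp ++ [:: c]) (x' ++ map Qs pq' ++ z'),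
        sw (act ci L) (word_inv z' ++ map Ms pq' ++ y') & padj pq'].
  move=> HN; exists x, pq, y, (z ++ [:: c]); split => //.
  rewrite (act_none Hci HN) word_inv_cat /= -/ci; exact: sw_refl.
case H5: (ins ci (word_inv z)) => [zz|].
  exfalso; have [A1 [u [A2 [EA Hp Hu _]]]] := ins_Some H5.
  have Ez : z = word_inv A2 ++ syll_inv u :: word_inv A1.
    by rewrite -(word_invK z) EA word_inv_cat word_inv_cons -catA.
  apply: (not_reduced_merge (a := x ++ map Qs pq ++ word_inv A2) (s := syll_inv u)
            (t := c) (b := word_inv A1) Hred); last by rewrite vx_inv Hu.
  apply: sw_trans Hh _; rewrite Ez -!catA /=.
  do 3 apply: sw_catl; apply: sw_cons; apply: sw_passr.
  by rewrite passes_inv -Hvc.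
case Hpz: (passes (vx ci) (word_inv z)); last first.
  by apply: prep; rewrite /L ins_cat H5 Hpz.
have Hpz' : passes (vx ci) z by rewrite -passes_inv.
case H6: (ins ci (map Ms pq)) => [mm|].
  exfalso; have [A1 [m [A2 [EA Hp Hm _]]]] := ins_Some H6.
  have [pq1 [k [pq2 [Epq E1 Em E2]]]] := map_eq_cons EA.
  have Hk : projT1 k = vx c by rewrite -Hvc -Hm Em.
  apply: (not_reduced_merge (a := x ++ map Qs pq1 ++ map Qs pq2 ++ z) (s := Qs k)
            (t := c) (b := [::]) Hred); last by rewrite /= Hk.
  apply: sw_trans Hh _; rewrite Epq map_cat /= -!catA /=.
  do 2 apply: sw_catl.
  have := @sw_pass (Qs k) (map Qs pq2 ++ z) [:: c]; rewrite -!catA; apply.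
  have Hz2 : passes (vx c) z by rewrite -Hvc.
  rewrite passes_cat /= Hk Hz2 andbT.
  move: H4; rewrite /padj Epq pairwise_cat /= => /and4P [_ _ Hall _].
  rewrite passes_map //; apply: sub_all Hall => k' /= He.
  rewrite -Hk He andbT; apply/negP => /eqP E; by move: He; rewrite E e_irr.
case Hpm: (passes (vx ci) (map Ms pq)); last first.
  by apply: prep; rewrite /L ins_cat H5 Hpz /= ins_cat H6 Hpm.
case H7: (ins ci y) => [yy|]; last first.
  by apply: prep; rewrite /L ins_cat H5 Hpz /= ins_cat H6 Hpm H7.
have [y1 [u [y2 [Ey Hp Hu Eyy]]]] := ins_Some H7.
have Hact : act ci L = word_inv z ++ map Ms pq ++ yy.
  by apply: act_some Hci _; rewrite /L ins_cat H5 Hpz /= ins_cat H6 Hpm H7.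
rewrite Hact Eyy; subst y yy.
have Hpc : passes (vx c) (map Qs pq ++ z) by rewrite passes_cat passes_Q -Hvc Hpm Hpz'.
move: Hh Hpc Hvc Hci Hu Hp Hpz Hpz' Hpm H1 H2 H3 Hcn Hc Hred IH H5 H6 H7.
rewrite /ci; clear ci L HW prep Hact.
case: c => v a; case: u => vu b /= Hh Hpc _ Hci Hu; subst vu.
move=> Hp Hpz Hpz' Hpm H1 H2 H3 Hcn Hc Hred IH H5 H6 H7.
case: (classic (gmul (ginv a) b = gone _)) => Hab.
  have Eb := gmulV_eq1 Hab; subst b.
  rewrite mergeone_one //.
  exists (x ++ [:: existT _ v a]), pq, (y1 ++ y2), z; split => //.
  - apply: sw_trans H1 _; rewrite -!catA /=; apply: sw_catl.
    have := @sw_passl (existT _ v a) (map Ps pq ++ y1) y2; rewrite -!catA; apply.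
    by rewrite passes_cat passes_P Hpm Hp.
  - apply: sw_trans Hh _; rewrite -!catA /=; apply: sw_catl.
    have := @sw_passr (existT _ v a) (map Qs pq ++ z); rewrite -!catA; apply; exact: Hpc.
  - exact: sw_refl.
rewrite mergeone_ne //.
exists x, (pq ++ [:: existT _ v (a, b)]), (y1 ++ y2), z; split.
- apply: sw_trans H1 _; rewrite map_cat -!catA /=; do 2 apply: sw_catl.
  exact: sw_passl.
- apply: sw_trans Hh _; rewrite map_cat -!catA /=; do 2 apply: sw_catl.
  by apply: sw_passr.
- rewrite map_cat -!catA /=; do 2 apply: sw_catl.
  exact: sw_passl.
- move: H4; rewrite /padj pairwise_cat => -> /=; rewrite andbT.
  move: Hpm; rewrite passes_map // => Hall.
  apply: sub_all Hall => k /= /andP [_ He]; by rewrite e_sym He.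
Qed.

Lemma mv_wequiv (a b : wrd) : mv a b -> wequiv e a b.
Proof.
elim => [x y H|x|x y z _ H1 _ H2]; last exact: rst_trans H1 H2.
  exact: rst_step.
exact: rst_refl.
Qed.

Lemma tail_of (g g0 pre suf : wrd) t d : CR g0 -> mv g g0 -> sw g0 (pre ++ suf) ->
  List.In t suf -> size suf <= d -> tail e d g t.
Proof.
move=> Hc Hm Hs Ht Hd; exists (pre ++ suf); split.
  split; first exact: CR_reduced (CR_sw Hc Hs).
  apply: rst_sym; apply: mv_wequiv; exact: rt_trans Hm (sw_mv Hs).
rewrite drop_cat size_cat.
have Hn : size pre + size suf - d <= size pre by rewrite leq_subLR addnC leq_add2r.
case: ifP => H; first by apply List.in_or_app; right.
have -> : size pre + size suf - d - size pre = 0.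
  by apply/eqP; rewrite subn_eq0.
by rewrite drop0.
Qed.

Lemma main_sec (g h r : wrd) :
  reduced_for e (word_inv h ++ g) r ->
  let d := size r in
  forall s, List.In s r ->
    tail e d g s
    \/ (exists t, tail e d h t /\ s = syll_inv t)
    \/ (exists (v : V) (a b : G v),
          tail e d h (existT _ v a) /\ tail e d g (existT _ v b) /\
          s = existT _ v (gmul (ginv a) b)).
Proof.
move=> [Hr Heq] d s Hs.
have Cg : CR (ev g) := CR_ev g.
have Ch : CR (ev h) := CR_ev h.
have Hrr : CR r := reduced_CR Hr.
have Ev : sw r (foldr act (ev g) (word_inv (ev h))).
  have E1 := ev_wequiv Heq; rewrite (ev_CR Hrr) in E1.
  have M1 : mv (word_inv h ++ g) (word_inv (ev h) ++ ev g).
    apply: rt_trans (mv_catr g (mv_inv (ev_mv_to h))) _.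
    exact: mv_catl (ev_mv_to g).
  have E2 := ev_mv M1; rewrite [ev (word_inv (ev h) ++ _)]ev_cat (ev_CR Cg) in E2.
  exact: sw_trans E1 E2.
have [x [pq [y [z [H1 H2 H3 H4]]]]] := decomp Cg Ch.
have Hs' := sw_trans Ev H3.
have Hd : d = size z + size pq + size y.
  by rewrite /d (sw_size Hs') !size_cat /word_inv size_rev !size_map addnA.
have := sw_In Hs' Hs; rewrite !List.in_app_iff; case=> [Hz|[Hm|Hy]].
- right; left; have [t [Ht ->]] := In_inv Hz; exists t; split => //.
  apply: (tail_of (pre := x ++ map Qs pq) (suf := z) Ch (ev_mv_to h)); first by rewrite -catA.
    exact: Ht.
  by rewrite Hd -addnA leq_addr.
- right; right; have [[v [a b]] [Hk ->]] := In_map Hm; exists v, a, b; split; last split => //.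
  + apply: (tail_of (pre := x) (suf := map Qs pq ++ z) Ch (ev_mv_to h) H2).
      by apply: List.in_or_app; left; exact: (In_map2 Qs Hk).
    by rewrite size_cat size_map Hd (addnC (size z)) leq_addr.
  + apply: (tail_of (pre := x) (suf := map Ps pq ++ y) Cg (ev_mv_to g) H1).
      by apply: List.in_or_app; left; exact: (In_map2 Ps Hk).
    by rewrite size_cat size_map Hd -addnA leq_addl.
- left; apply: (tail_of (pre := x ++ map Ps pq) (suf := y) Cg (ev_mv_to g)); first by rewrite -catA.
    exact: Hy.
  by rewrite Hd leq_addl.
Qed.
End Main.

Theorem mainTheorem6 (V : finType) (e : rel V) (G : V -> grp)
  (e_sym : symmetric e) (e_irr : irreflexive e)
  (g h r : word G) :
  reduced_for e (word_inv h ++ g) r ->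
  let d := size r in
  forall s, List.In s r ->
    tail e d g s
    \/ (exists t, tail e d h t /\ s = syll_inv t)
    \/ (exists (v : V) (a b : G v),
          tail e d h (existT _ v a) /\ tail e d g (existT _ v b) /\
          s = existT _ v (gmul (ginv a) b)).
Proof. exact: (@main_sec V e G e_sym e_irr g h r). Qed.
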